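(* Let $d\geq 2$ and $U=(u_{ij})_{i,j=1}^d\in\mathcal{U}_d(\mathbb{C})$ be such that $$\min_i\max_j|u_{ij}|^2>\sqrt{\frac{1+\frac{1}{\sqrt d}}{2}}.$$ Then there are no $l\in\{1,\dots,d\}$ and $D_1,D_2\in\mathcal{DU}_d(\mathbb{C})$ such that $D_2U^\dagger D_1U|l\rangle$ is maximally mutually coherent; i.e., Alice and Bob cannot generate a maximally mutually coherent state with just three strokes of the coherence engine.
   Context: $\mathcal{U}_d(\mathbb{C})$ denotes the group of $d\times d$ unitary matrices and $\mathcal{DU}_d(\mathbb{C})$ its subgroup of diagonal unitary matrices; $\{|j\rangle\}$ is the computational basis (Alice's basis) and Bob's basis is $\{U^\dagger|j\rangle\}$. Alice's free operations are $\mathcal{DU}_d(\mathbb{C})$ and Bob's are $\{U^\dagger DU:D\in\mathcal{DU}_d(\mathbb{C})\}$; a three-stroke protocol consists of Alice preparing $|l\rangle$, Bob applying $U^\dagger D_1U$, Alice applying $D_2$. A pure state $|\psi\rangle$ is maximally mutually coherent if $|\langle j|\psi\rangle|=|\langle j|U|\psi\rangle|=1/\sqrt d$ for all $j$. *)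

(* Defs.v *)
(* complex numbers modelled as R[i] = complex R for an
   arbitrary real closed field R (this includes the real numbers). *)
From mathcomp Require Import all_boot all_order all_algebra.
From mathcomp Require Import complex.
Set Implicit Arguments. Unset Strict Implicit. Unset Printing Implicit Defensive.
Import Order.TTheory GRing.Theory Num.Theory ComplexField.
Local Open Scope ring_scope.

Section Defs.
Variable R : rcfType.

Definition adjmx (m n : nat) (A : 'M[R[i]]_(m, n)) : 'M[R[i]]_(n, m) :=
  (map_mx (fun z => z^*) A)^T.

Definition unitary_mx (d : nat) (U : 'M[R[i]]_d) : Prop :=
  U *m adjmx U = 1%:M /\ adjmx U *m U = 1%:M.

Definition diag_unitary_mx (d : nat) (D : 'M[R[i]]_d) : Prop :=
  unitary_mx D /\ (forall i j : 'I_d, i != j -> D i j = 0).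

Definition ket (d : nat) (l : 'I_d) : 'cV[R[i]]_d := delta_mx l 0.

(* maximally mutually coherent pure state w.r.t. {|j>} and {U^dagger |j>}:
   |<j|psi>| = |<j|U|psi>| = 1/sqrt d for all j *)
Definition max_mut_coherent (d : nat) (U : 'M[R[i]]_d) (psi : 'cV[R[i]]_d) : Prop :=
  forall j : 'I_d,
    `|psi j 0| = 1 / sqrtC d%:R /\ `|(U *m psi) j 0| = 1 / sqrtC d%:R.
End Defs.

(* Main.v *)
Require Import Defs.
From mathcomp Require Import all_boot all_order all_algebra.
From mathcomp Require Import complex ring lra.
Import Order.TTheory GRing.Theory Num.Theory ComplexField.
Local Open Scope ring_scope.
Set Implicit Arguments. Unset Strict Implicit.

Lemma cs_sum (F : numFieldType) (I : finType) (P : pred I) (x : I -> F) :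
  (forall i, 0 <= x i) ->
  (\sum_(i | P i) x i) ^+ 2 <= #|P|%:R * \sum_(i | P i) x i ^+ 2.
Proof.
move=> x0.
set s := \sum_(i | P i) x i; set Q := \sum_(i | P i) x i ^+ 2.
have s0 : 0 <= s by apply: sumr_ge0.
have [Pn0|Pgt0] := posnP #|P|.
  have -> : s = 0.
    by rewrite /s big_pred0 // => i; move: (card0_eq Pn0 i); rewrite !inE.
  by rewrite expr0n /= Pn0 mul0r.
set n : F := #|P|%:R.
have n0 : 0 < n by rewrite ltr0n.
set m := s / n.
have m0 : 0 <= m by rewrite divr_ge0 // ltW.
have h : \sum_(i | P i) (x i - m) ^+ 2 = Q - s ^+ 2 / n.
  transitivity (\sum_(i | P i) (x i ^+ 2 - (x i * (m *+ 2))) + \sum_(i | P i) m ^+ 2).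
    rewrite -big_split /=; apply: eq_bigr => i _; rewrite sqrrB; ring.
  rewrite sumrB -mulr_suml sumr_const /Q /m -/s -/n.
  rewrite -mulr_natr. field. by rewrite lt0r_neq0.
have : 0 <= Q - s ^+ 2 / n.
  rewrite -h; apply: sumr_ge0 => i _.
  rewrite -real_normK ?exprn_ge0 // rpredB // ger0_real //.
by rewrite subr_ge0 ler_pdivrMr // mulrC.
Qed.

Lemma final_ineq (F : numFieldType) (r p s : F) : 1 < r -> 0 <= p ->
  p * r <= p + s -> s ^+ 2 <= (r ^+ 2 - 1) * (1 - p ^+ 2) ->
  p ^+ 2 <= (1 + r^-1) / 2.
Proof.
move=> r1 p0 h1 h2.
have r10 : 0 < r - 1 by rewrite subr_gt0.
have r0 : 0 < r by apply: lt_trans r1.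
have h1' : p * (r - 1) <= s by rewrite mulrBr mulr1 lerBlDl.
have pr0 : 0 <= p * (r - 1) by rewrite mulr_ge0 // ltW.
have h3 : (p * (r - 1)) ^+ 2 <= s ^+ 2 by rewrite !expr2; apply: ler_pM.
have h4 : (r - 1) * (p ^+ 2 * (r - 1)) <= (r - 1) * ((r + 1) * (1 - p ^+ 2)).
  have -> : (r - 1) * (p ^+ 2 * (r - 1)) = (p * (r - 1)) ^+ 2 by ring.
  have -> : (r - 1) * ((r + 1) * (1 - p ^+ 2)) = (r ^+ 2 - 1) * (1 - p ^+ 2) by ring.
  exact: le_trans h3 h2.
rewrite ler_pM2l // -subr_ge0 in h4.
have e : (r + 1) * (1 - p ^+ 2) - p ^+ 2 * (r - 1) = (r + 1) - p ^+ 2 * (r *+ 2).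
  by rewrite -mulr_natr; ring.
rewrite e in h4.
rewrite subr_ge0 in h4.
have r20 : 0 < r *+ 2 by rewrite mulrn_wgt0.
rewrite -(ler_pM2r r20) (le_trans h4) //.
rewrite le_eqVlt; apply/orP; left; apply/eqP; rewrite -mulr_natr; field; exact: lt0r_neq0.
Qed.

Section M.
Variable R : rcfType.
Local Notation C := R[i].

Lemma adjmxE (m n : nat) (A : 'M[C]_(m, n)) i j : adjmx A i j = (A j i)^*.
Proof. by rewrite /adjmx !mxE. Qed.

Lemma row_norm d (U : 'M[C]_d) : unitary_mx U ->
  forall i, \sum_j `|U i j| ^+ 2 = 1.
Proof.
move=> [h _] i; have := congr1 (fun M : 'M[C]_d => M i i) h; rewrite !mxE eqxx /= => H; rewrite -[RHS]H.
by apply: eq_bigr => j _; rewrite adjmxE normCK.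
Qed.

Lemma col_norm d (U : 'M[C]_d) : unitary_mx U ->
  forall j, \sum_i `|U i j| ^+ 2 = 1.
Proof.
move=> [_ h] j; have := congr1 (fun M : 'M[C]_d => M j j) h; rewrite !mxE eqxx /= => H; rewrite -[RHS]H.
by apply: eq_bigr => i _; rewrite adjmxE normCKC.
Qed.

Lemma diag_norm d (D : 'M[C]_d) : diag_unitary_mx D -> forall j, `|D j j| = 1.
Proof.
move=> [hu hd] j; have := row_norm hu j.
rewrite (bigD1 j) //= big1 ?addr0 => [h|k kj]; last by rewrite hd 1?eq_sym // normr0 expr0n.
by apply/eqP; rewrite -sqrp_eq1 ?h.
Qed.

End M.

Theorem corollary15 (R : rcfType) (d : nat) (hd : (2 <= d)%N) (U : 'M[R[i]]_d) :
  unitary_mx U ->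
  (forall i : 'I_d, exists j : 'I_d,
      sqrtC ((1 + 1 / sqrtC d%:R) / 2) < `|U i j| ^+ 2) ->
  ~ (exists (l : 'I_d) (D1 D2 : 'M[R[i]]_d),
       diag_unitary_mx D1 /\ diag_unitary_mx D2 /\
       max_mut_coherent U (D2 *m adjmx U *m D1 *m U *m ket R l)).
Proof.
move=> hU hbig [l [D1 [D2 [hD1 [hD2 hcoh]]]]].
set r : R[i] := sqrtC d%:R.
have r1 : 1 < r.
  by rewrite /r -[X in X < _]sqrtC1 ltr_sqrtC ?qualifE /= ?ler01 ?ler0n // ltr1n.
have r0 : 0 < r by apply: lt_trans r1.
set t : R[i] := (1 + 1 / r) / 2.
set c := sqrtC t.
have t0 : 0 <= t by rewrite divr_ge0 ?ler0n // addr_ge0 ?ler01 // divr_ge0 ?ler01 // ltW.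
have t1 : t <= 1.
  have ir1 : 1 / r <= 1 by rewrite ler_pdivrMr // mul1r ltW.
  rewrite ler_pdivrMr ?ltr0n // [X in _ <= X]mul1r.
  apply: (@le_trans _ _ (1 + 1)); first by rewrite lerD2l.
  by [].
have tc : t <= c.
  have c1 : c <= 1 by rewrite /c -[X in _ <= X]sqrtC1 ler_sqrtC ?qualifE /= ?ler01.
  have c0 : 0 <= c by rewrite sqrtC_ge0.
  have -> : t = c * c by rewrite -expr2 sqrtCK.
  by apply: (le_trans (ler_wpM2l c0 c1)); rewrite mulr1.
have t12 : 1 <= t *+ 2.
  by rewrite /t mulr2n -splitr lerDl divr_ge0 ?ler01 // ltW.
have [f hf] := fin_all_exists hbig.
have finj : injective f.
  move=> i i' eqf; apply/eqP; apply/negP => /negP ii'.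
  have := col_norm hU (f i).
  rewrite (bigD1 i) //= (bigD1 i') /= 1?eq_sym // addrA => H.
  have : 1 < `|U i (f i)| ^+ 2 + `|U i' (f i)| ^+ 2.
    apply: le_lt_trans t12 _; rewrite mulr2n.
    apply: ltrD; apply: le_lt_trans tc _; first exact: hf.
    by rewrite eqf; exact: hf.
  rewrite -H => /lt_geF; rewrite lerDl sumr_ge0 // => k _.
  exact: exprn_ge0.
have [g fK gK] := injF_bij finj.
set i := g l.
have hil : c < `|U i l| ^+ 2 by have := hf i; rewrite /i gK.
set psi := D2 *m adjmx U *m D1 *m U *m ket R l.
set X := D1 *m (U *m ket R l).
set z := adjmx D2 *m psi.
have UzX : U *m z = X.
  rewrite /z; have -> : psi = D2 *m (adjmx U *m X) by rewrite /psi /X !mulmxA.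
  by rewrite (mulmxA (adjmx D2)) (proj2 (proj1 hD2)) mul1mx mulmxA (proj1 hU) mul1mx.
have Xi : X i 0 = D1 i i * U i l.
  rewrite /X /ket -colE mxE (bigD1 i) //= big1 ?addr0 ?mxE // => k ki.
  by rewrite (proj2 hD1) ?mul0r // eq_sym.
have zj : forall j, `|z j 0| = 1 / r.
  move=> j; rewrite /z mxE (bigD1 j) //= big1 ?addr0.
    by rewrite normrM adjmxE norm_conjC (diag_norm hD2) mul1r (proj1 (hcoh j)) /r !mul1r.
  by move=> k kj; rewrite adjmxE (proj2 hD2) ?conjC0 ?mul0r.
set p := `|U i l|.
set s := \sum_(j | j != l) `|U i j|.
have h1 : p * r <= p + s.
  have pX : p = `|X i 0| by rewrite Xi normrM (diag_norm hD1) mul1r.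
  rewrite -ler_pdivlMr // {1}pX -UzX mxE (le_trans (ler_norm_sum _ _ _)) //.
  have -> : (p + s) / r = \sum_j `|U i j| * (1 / r).
    by rewrite -mulr_suml (bigD1 l) //= mul1r.
  by apply: ler_sum => j _; rewrite normrM zj.
have h2 : s ^+ 2 <= (r ^+ 2 - 1) * (1 - p ^+ 2).
  apply: le_trans (cs_sum _ _) _ => [j|]; first exact: normr_ge0.
  have -> : #|(fun j => j != l)| = d.-1.
    transitivity #|predC1 l|; first by apply: eq_card => j; rewrite !inE.
    by rewrite cardC1 card_ord.
  have -> : \sum_(j | j != l) `|U i j| ^+ 2 = 1 - p ^+ 2.
    by rewrite -(row_norm hU i) [in RHS](bigD1 l) //= addrC addrK.
  by rewrite sqrtCK -subn1 natrB // ltnW.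
have := final_ineq r1 (normr_ge0 _) h1 h2.
move=> hpt0; have hpt : p ^+ 2 <= t by rewrite /t mul1r.
by move: (le_lt_trans tc hil) => /lt_geF; rewrite hpt.
Qed.
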